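(* Let $N=d\ge2$, $w>1$, let $\mathcal{G}$ be the causal graph on $[N]$, $W_Q=W_K=0$ (so $A_{ij}=1/i$ for $j\le i$ and $0$ otherwise), and let $W_V\in\mathbb{R}^{N\times N}$ have $1$ on the diagonal, $w$ on the superdiagonal and $0$ elsewhere. For signs $s_1,\dots,s_N\in\{\pm1\}$ define $X\in\mathbb{R}^{N\times N}$ row by row: $X_{1,:}=s_1e_N$, and for $k\ge2$, $X_{k,j}=-X_{k-1,j+1}/w$ for $1\le j\le N-1$ and $X_{k,N}=s_k\sqrt{1-1/w^2}$. Then each of these $2^N$ matrices is an equilibrium of the LayerNorm dynamics $X\mapsto DAXW_V$ (with $D=\mathrm{diag}(1/\|(AXW_V)_{i,:}\|_2)$), has unit-norm rows and rank $N$, and its stable rank satisfies $$1\le \mathrm{SRank}(X)=\frac{\|X\|_F^2}{\|X\|_2^2}\le\frac{N}{N-(N-1)/w^2}.$$ Consequently, for any $\delta>0$, choosing $w\ge\sqrt{1/\delta+1}$ gives $\mathrm{SRank}(X)\le 1+\delta$.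
   Context: $e_N$ is the $N$-th standard basis row vector of $\mathbb{R}^N$. The causal graph has edges $(j,i)$ for $j\le i$, meaning token $i$ attends to tokens $1,\dots,i$. An equilibrium is a fixed point of the update map. $\|\cdot\|_F$ is the Frobenius norm and $\|\cdot\|_2$ the spectral norm. *)

(* Defs.v *)
From mathcomp Require Import all_boot all_order all_algebra.
From mathcomp Require Import boolp classical_sets reals.
Set Implicit Arguments. Unset Strict Implicit. Unset Printing Implicit Defensive.
Import Order.TTheory GRing.Theory Num.Theory.
Local Open Scope ring_scope.

(* All indices are 0-based: paper row/column i corresponds to i-1 here. *)

Section Defs.
Variable R : realType.

Definition row_sqnorm m n (M : 'M[R]_(m, n)) (i : 'I_m) : R :=
  \sum_(j < n) M i j ^+ 2.

Definition frobnorm m n (M : 'M[R]_(m, n)) : R :=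
  Num.sqrt (\sum_(i < m) \sum_(j < n) M i j ^+ 2).

Definition cv_sqnorm n (v : 'cV[R]_n) : R := \sum_(i < n) v i 0 ^+ 2.

Definition specnorm m n (M : 'M[R]_(m, n)) : R :=
  Num.sqrt (sup [set y : R | exists v : 'cV[R]_n,
                   cv_sqnorm v = 1 /\ y = cv_sqnorm (M *m v)]%classic).

Definition srank m n (M : 'M[R]_(m, n)) : R :=
  frobnorm M ^+ 2 / specnorm M ^+ 2.

(* Attention matrix on the causal graph with W_Q = W_K = 0: the softmax
   scores are all equal, so token i attends uniformly to tokens 1..i:
   A_{ij} = 1/i for j <= i (1-based), 0 otherwise. *)
Definition causal_attn N : 'M[R]_N :=
  \matrix_(i < N, j < N) (if (j <= i)%N then (i.+1%:R)^-1 else 0).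

Definition WV N (w : R) : 'M[R]_N :=
  \matrix_(i < N, j < N)
    (if j == i :> nat then 1 else if j == i.+1 :> nat then w else 0).

Definition ln_update N (A Wv X : 'M[R]_N) : 'M[R]_N :=
  let M := A *m X *m Wv in
  \matrix_(i < N, j < N) (M i j / Num.sqrt (row_sqnorm M i)).

Definition is_equilibrium N (A Wv X : 'M[R]_N) : Prop := ln_update A Wv X = X.

Fixpoint xentry (N : nat) (w : R) (s : nat -> R) (k j : nat) : R :=
  match k with
  | 0 => if j == N.-1 then s 0%N else 0
  | k'.+1 => if (j < N.-1)%N then - xentry N w s k' j.+1 / w
             else s k * Num.sqrt (1 - (w ^+ 2)^-1)
  end.

Definition Xmat N (w : R) (s : nat -> R) : 'M[R]_N :=
  \matrix_(i < N, j < N) xentry N w s i j.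

End Defs.

(* Main.v *)
Require Import Defs.
From mathcomp Require Import all_boot all_order all_algebra.
From mathcomp Require Import boolp classical_sets reals.
From mathcomp Require Import fingroup perm ring lra zify.
Import Order.TTheory GRing.Theory Num.Theory.
Local Open Scope ring_scope.

Section X.
Variables (R : realType) (n : nat) (w : R) (s : nat -> R).
Hypothesis w1 : 1 < w.
Hypothesis hs : forall k, (k < n.+1)%N -> s k = 1 \/ s k = -1.
Local Notation x := (xentry n.+1 w s).

Lemma wn0 : w != 0. Proof. by apply: lt0r_neq0; apply: lt_trans ltr01 w1. Qed.

Lemma xZ k j : (j + k < n)%N -> x k j = 0.
Proof.
elim: k j => [|k IH] j /= H.
  by rewrite ifN //; apply/eqP; lia.
have -> : (j < n)%N by lia.
by rewrite IH ?oppr0 ?mul0r //; lia.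
Qed.

Lemma xAD k : (k <= n)%N -> x k (n - k) != 0.
Proof.
elim: k => [|k IH] H /=.
  by rewrite subn0 eqxx; case: (hs 0 (ltn0Sn n)) => ->; rewrite ?oppr_eq0 oner_eq0.
have -> : (n - k.+1 < n)%N by lia.
have -> : ((n - k.+1).+1 = n - k)%N by lia.
rewrite mulNr oppr_eq0 mulf_neq0 ?invr_eq0 ?wn0 ?IH //; lia.
Qed.

Lemma s2 k : (k < n.+1)%N -> s k ^+ 2 = 1.
Proof. by case/hs => ->; rewrite ?expr1n ?sqrrN ?expr1n. Qed.

Lemma c2 : Num.sqrt (1 - (w ^+ 2)^-1) ^+ 2 = 1 - (w ^+ 2)^-1.
Proof.
have w2 : 1 <= w ^+ 2 by rewrite expr2; have := w1; move=> ?; nra.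
rewrite sqr_sqrtr // subr_ge0 invf_le1 //; apply: lt_le_trans w2; exact: ltr01.
Qed.

Lemma xrow k : (k < n.+1)%N -> \sum_(j < n.+1) x k j ^+ 2 = 1.
Proof.
elim: k => [|k IH] H.
  rewrite big_ord_recr /= eqxx big1 ?add0r; last first.
    by move=> j _; rewrite ifN ?expr0n //= ; apply/eqP => E; have := ltn_ord j; lia.
  exact: s2.
rewrite big_ord_recr /= ltnn.
have IH' := IH (ltnW H).
rewrite big_ord_recl xZ /= in IH'; last by lia.
rewrite expr0n add0r in IH'.
under eq_bigr => j _ do rewrite /= ltn_ord /= exprMn sqrrN exprVn.
rewrite -big_distrl /=.
have -> : \sum_(i < n) x k (widen_ord (leqnSn n) i).+1 ^+ 2 = \sum_(i < n) x k (lift ord0 i) ^+ 2 by [].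
rewrite IH' exprMn s2 // c2; field; exact: wn0.
Qed.

Lemma sumW (F : nat -> R) m j :
  \sum_(l < m) F l * (if j == l :> nat then 1 else if j == l.+1 then w else 0)
  = (if (j < m)%N then F j else 0) + (if (0 < j <= m)%N then w * F j.-1 else 0).
Proof.
elim: m => [|m IH]; first by rewrite big_ord0 /=; case: j => [|j] /=; rewrite addr0.
rewrite big_ord_recr /= IH.
case: (ltngtP j m) => Hjm.
- have -> : (j == m.+1) = false by apply/eqP; lia.
  have -> : (j < m.+1)%N by lia.
  have -> : (j <= m.+1)%N by lia.
  by rewrite andbT mulr0 addr0.
- have -> : (j < m.+1)%N = false by lia.
  rewrite andbF add0r; case: eqP => E.
    have -> : (0 < j <= m.+1)%N by lia.
    by rewrite E /= !add0r mulrC.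
  have -> : (0 < j <= m.+1)%N = false by lia.
  by rewrite mulr0 !addr0.
- subst j; rewrite ltnSn leqW // andbT mulr1 add0r addrC. by [].
Qed.

Lemma sumA (G : nat -> R) a i m :
  \sum_(k < m) (if (k <= i)%N then a else 0) * G k = a * \sum_(k < minn m i.+1) G k.
Proof.
elim: m => [|m IH]; first by rewrite big_ord0 min0n big_ord0 mulr0.
rewrite big_ord_recr /= IH.
case: (leqP m i) => H.
  have -> : minn m.+1 i.+1 = m.+1 by rewrite !minnE; lia.
  have -> : minn m i.+1 = m by rewrite !minnE; lia.
  by rewrite big_ord_recr /= mulrDr.
have -> : minn m.+1 i.+1 = minn m i.+1 by rewrite !minnE; lia.
by rewrite mul0r addr0.
Qed.

Definition Y k j := x k j + (if (0 < j <= n.+1)%N then w * x k j.-1 else 0).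

Lemma Y0 j : (j < n.+1)%N -> Y 0 j = x 0 j.
Proof.
move=> Hj; rewrite /Y; case: ifP => H; last by rewrite addr0.
move/andP: H => [H1 H2].
rewrite [x 0 j.-1]/=; have -> : (j.-1 == n) = false by apply/eqP; lia.
by rewrite mulr0 addr0.
Qed.

Lemma YS k j : (k < n)%N -> (j < n.+1)%N -> Y k.+1 j = x k.+1 j - x k j.
Proof.
move=> Hk Hj; rewrite /Y; case: ifP => H.
  move/andP: H => [H1 H2].
  rewrite [x k.+1 j.-1]/=; have -> : (j.-1 < n)%N by lia.
  have -> : j.-1.+1 = j by lia.
  congr (_ + _); rewrite mulrCA mulfV ?mulr1 //; exact: wn0.
have -> : j = 0%N by case: j H Hj => // j /= H /ltnW; rewrite H.
by rewrite (xZ k 0) ?subr0 ?addr0 //; lia.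
Qed.

Lemma telesc i j : (i < n.+1)%N -> (j < n.+1)%N -> \sum_(k < i.+1) Y k j = x i j.
Proof.
elim: i => [|i IH] Hi Hj; first by rewrite big_ord1 Y0.
rewrite big_ord_recr IH ?(ltnW Hi) // (YS i j) //. change (x i j + (x i.+1 j - x i j) = x i.+1 j). by rewrite addrC subrK.
Qed.

Lemma Mij (i j : 'I_n.+1) :
  (causal_attn R n.+1 *m Xmat n.+1 w s *m WV n.+1 w) i j = (i.+1%:R)^-1 * x i j.
Proof.
rewrite -mulmxA mxE.
have E : forall k : 'I_n.+1, (Xmat n.+1 w s *m WV n.+1 w) k j = Y k j.
  move=> k; rewrite mxE.
  under eq_bigr => l _ do rewrite !mxE.
  by rewrite (sumW (fun l => x k l)) ltn_ord.
under eq_bigr => k _ do rewrite E mxE.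
rewrite (sumA (fun k => Y k j)); congr (_ * _).
have -> : minn n.+1 i.+1 = i.+1 by apply/minn_idPr; exact: ltn_ord.
exact: telesc.
Qed.

Lemma equil : is_equilibrium (causal_attn R n.+1) (WV n.+1 w) (Xmat n.+1 w s).
Proof.
apply/matrixP => i j; rewrite /ln_update mxE Mij /row_sqnorm.
under eq_bigr => l _ do rewrite Mij exprMn.
rewrite -big_distrr /= xrow // mulr1 sqrtr_sqr ger0_norm; last by rewrite invr_ge0 ler0n.
by rewrite mxE mulrAC mulfV ?mul1r // invr_eq0 pnatr_eq0.
Qed.

Lemma rank_full : \rank (Xmat n.+1 w s) = n.+1.
Proof.
apply: mxrank_unit; rewrite unitmxE unitfE.
pose P : {perm 'I_n.+1} := perm (@rev_ord_inj n.+1).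
have : \det (col_perm P (Xmat n.+1 w s)) != 0.
  rewrite det_trig; last first.
    apply/is_trig_mxP => i j Hij; rewrite !mxE permE /=.
    apply: xZ; have := ltn_ord j; lia.
  rewrite prodf_seq_neq0; apply/allP => i _ /=; rewrite !mxE permE /=.
  have -> : (n.+1 - i.+1 = n - i)%N by lia.
  apply: xAD; have := ltn_ord i; lia.
by rewrite col_permE det_mulmx mulf_eq0 negb_or => /andP[].
Qed.

Lemma cs m (a b : 'I_m -> R) : \sum_i a i ^+ 2 = 1 -> \sum_i b i ^+ 2 = 1 ->
  (\sum_i a i * b i) ^+ 2 <= 1.
Proof.
move=> ha hb.
set S := \sum_i a i * b i.
have h1 : 0 <= 2 - 2 * S.
  have -> : 2 - 2 * S = \sum_i (a i - b i) ^+ 2.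
    under eq_bigr do rewrite sqrrB.
    rewrite big_split big_split /= sumrN sumrMnl ha hb /S mulr_natl; ring.
  by apply: sumr_ge0 => i _; exact: sqr_ge0.
have h2 : 0 <= 2 + 2 * S.
  have -> : 2 + 2 * S = \sum_i (a i + b i) ^+ 2.
    under eq_bigr do rewrite sqrrD.
    rewrite big_split big_split /= sumrMnl ha hb /S mulr_natl; ring.
  by apply: sumr_ge0 => i _; exact: sqr_ge0.
nra.
Qed.

Lemma bound (v : 'cV[R]_n.+1) : cv_sqnorm v = 1 ->
  cv_sqnorm (Xmat n.+1 w s *m v) <= n.+1%:R.
Proof.
move=> hv; rewrite /cv_sqnorm.
under eq_bigr do rewrite mxE.
apply: (@le_trans _ _ (\sum_(i < n.+1) (1:R))); last by rewrite sumr_const card_ord.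
apply: ler_sum => i _; apply: cs => //.
under eq_bigr do rewrite mxE; exact: xrow.
Qed.

Definition e0 : 'cV[R]_n.+1 := delta_mx ord_max 0.

Lemma e0n : cv_sqnorm e0 = 1.
Proof.
rewrite /cv_sqnorm (bigD1 ord_max) //= big1 => [|i /negbTE Hi]; rewrite !mxE ?Hi ?eqxx /=.
  by rewrite expr1n addr0.
by rewrite expr0n.
Qed.

Lemma Xe0 : cv_sqnorm (Xmat n.+1 w s *m e0) = 1 + n%:R * (1 - (w ^+ 2)^-1).
Proof.
rewrite /e0 -colE /cv_sqnorm big_ord_recl !mxE /= eqxx s2 //.
under eq_bigr => i _ do rewrite !mxE /= ltnn exprMn c2 (s2 _ (ltn_ord (lift ord0 i))) mul1r.
by rewrite sumr_const card_ord mulr_natl.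
Qed.
End X.

Theorem mainTheorem14 (R : realType) (N : nat) (w : R) (s : nat -> R) :
  (2 <= N)%N -> 1 < w ->
  (forall k, (k < N)%N -> s k = 1 \/ s k = -1) ->
  let X := Xmat N w s in
  [/\ is_equilibrium (causal_attn R N) (WV N w) X,
      (forall i : 'I_N, row_sqnorm X i = 1),
      \rank X = N,
      1 <= srank X /\ srank X <= N%:R / (N%:R - (N.-1)%:R / w ^+ 2)
    & forall delta : R, 0 < delta -> Num.sqrt (delta^-1 + 1) <= w ->
        srank X <= 1 + delta].
Proof.
case: N => [|n] // hN w1 hs X; rewrite {}/X /=.
have hrow : forall i : 'I_n.+1, \sum_(j < n.+1) Xmat n.+1 w s i j ^+ 2 = 1.
  by move=> i; under eq_bigr do rewrite mxE; exact: (@xrow R n w s w1 hs).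
set L := 1 + n%:R * (1 - (w ^+ 2)^-1).
have hu : 0 <= 1 - (w ^+ 2)^-1 by rewrite -(@c2 R w w1); exact: sqr_ge0.
have hL1 : 1 <= L by rewrite /L lerDl; apply: mulr_ge0 => //; exact: ler0n.
have hLe : L = n.+1%:R - n%:R / w ^+ 2.
  by rewrite /L -[n.+1]add1n natrD; ring.
set S := [set y : R | exists v : 'cV[R]_n.+1,
                   cv_sqnorm v = 1 /\ y = cv_sqnorm (Xmat n.+1 w s *m v)]%classic.
have hSL : S L by exists (e0 R n); split; [exact: e0n | rewrite (@Xe0 R n w s w1 hs)].
have hub : ubound S n.+1%:R by move=> y [v [hv ->]]; exact: (@bound R n w s w1 hs).
have hsup1 : sup S <= n.+1%:R by apply: ge_sup => //; exists L.
have hsup2 : L <= sup S by apply: ub_le_sup => //; exists n.+1%:R.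
have hp : 0 < sup S by apply: lt_le_trans hsup2; apply: lt_le_trans hL1; exact: ltr01.
have hsr : srank (Xmat n.+1 w s) = n.+1%:R / sup S.
  rewrite /srank /frobnorm /specnorm.
  have -> : \sum_(i < n.+1) \sum_(j < n.+1) Xmat n.+1 w s i j ^+ 2 = n.+1%:R.
    under eq_bigr do rewrite (hrow _).
    by rewrite sumr_const card_ord.
  by rewrite sqr_sqrtr ?ler0n // sqr_sqrtr // ltW.
have hL0 : 0 < L by apply: lt_le_trans hL1; exact: ltr01.
have hmain : srank (Xmat n.+1 w s) <= n.+1%:R / L.
  rewrite hsr ler_pM2l ?ltr0Sn // lef_pV2 //.
split.
- exact: (@equil R n w s w1 hs).
- by move=> i; rewrite /row_sqnorm; exact: hrow.
- exact: (@rank_full R n w s w1 hs).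
- split; last by rewrite -hLe.
  by rewrite hsr ler_pdivlMr // mul1r.
move=> d hd hdw.
apply: le_trans hmain _.
rewrite ler_pdivrMr //.
have hw2 : d^-1 + 1 <= w ^+ 2.
  have h0 : 0 <= d^-1 + 1 by apply: addr_ge0 => //; rewrite invr_ge0 ltW.
  rewrite -(sqr_sqrtr h0); have := sqrtr_ge0 (d^-1 + 1).
  move: hdw; set q := Num.sqrt _ => hq hq0; rewrite !expr2; nra.
have h1 : 1 + d <= d * w ^+ 2.
  have : d * (d^-1 + 1) <= d * w ^+ 2 by rewrite ler_pM2l.
  by rewrite mulrDr mulfV ?lt0r_neq0 // mulr1.
have hw0 : 0 < w ^+ 2 by apply: exprn_gt0; apply: lt_trans ltr01 w1.
set u := (w ^+ 2)^-1.
have hu1 : u * w ^+ 2 = 1 by rewrite mulVf // lt0r_neq0.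
have hu0 : 0 <= u by rewrite invr_ge0 ltW.
have hdu : (1 + d) * u <= d.
  have := ler_wpM2r hu0 h1; by rewrite -mulrA [w ^+ 2 * u]mulrC hu1 mulr1.
rewrite /L -/u.
have hn : 0 <= n%:R :> R by exact: ler0n.
rewrite -[n.+1]add1n natrD.
move: hdu hn hu0 hd; set m := n%:R; move=> hdu hn hu0 hd'.
nra.
Qed.
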